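(* $\displaystyle\lim_{m\to\infty} sd(\mathbb{Z}_2\times Q_{2^{m+1}})=0.$
   Context: For a finite group $G$, $L(G)$ is the set of all subgroups of $G$ and $sd(G)=\frac{1}{|L(G)|^2}|\{(H,K)\in L(G)^2: HK=KH\}|$. $Q_{2^{m+1}}=\langle x,y\mid x^{2^m}=e,\ y^2=x^{2^{m-1}},\ y^{-1}xy=x^{-1}\rangle$ is the generalized quaternion group of order $2^{m+1}$ ($m\geq 2$). *)

(* Defs.v *)
From mathcomp Require Import all_boot all_order all_algebra all_fingroup all_solvable.
Set Implicit Arguments. Unset Strict Implicit. Unset Printing Implicit Defensive.
Import GroupScope GRing.Theory Num.Theory.

Definition subgroup_lattice (gT : finGroupType) (G : {set gT}) : {set {set gT}} :=
  [set H : {set gT} | group_set H && (H \subset G)].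

Definition sd (gT : finGroupType) (G : {set gT}) : rat :=
  ((#|[set p : {set gT} * {set gT} |
        [&& p.1 \in subgroup_lattice G, p.2 \in subgroup_lattice G
          & (p.1 * p.2)%g == (p.2 * p.1)%g]]|)%:R
   / ((#|subgroup_lattice G| ^ 2)%N)%:R)%R.

Definition Z2xQ (m : nat) : finGroupType := ('I_2 * 'Q_(2 ^ m.+1))%type.

(* Main.v *)
From mathcomp Require Import all_boot all_order all_algebra all_fingroup all_solvable.
From mathcomp Require Import zify.
From mathcomp Require Import lra.
Require Import Defs.
Set Implicit Arguments. Unset Strict Implicit. Unset Printing Implicit Defensive.
Import GroupScope.

Definition PermSet (gT : finGroupType) (G : {set gT}) := [set p : {set gT} * {set gT} |
        [&& p.1 \in subgroup_lattice G, p.2 \in subgroup_lattice G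
          & (p.1 * p.2)%g == (p.2 * p.1)%g]].

Lemma inS (gT : finGroupType) (A : {set gT}) : (A \in subgroup_lattice [set: gT]) = group_set A.
Proof. by rewrite inE subsetT andbT. Qed.

Section QPart.
Variables (gT : finGroupType) (x : gT) (m : nat).
Hypotheses (oQ : #|[set: gT]| = (2 ^ m.+1)%N) (ox : #[x] = (2 ^ m)%N).
Local Notation X := <[x]>.

Definition Xj j := <[x ^+ (2 ^ (m - j))%N]>.

Lemma card_X : #|X| = (2 ^ m)%N. Proof. exact: ox. Qed.

Lemma card_Xj j : j <= m -> #|Xj j| = (2 ^ j)%N.
Proof.
move=> le_jm; rewrite /Xj -/(#[_]) orderXdiv ox.
  have e : (2 ^ m = 2 ^ (m - j) * 2 ^ j)%N by rewrite -expnD subnK.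
  by rewrite {1}e mulKn ?expn_gt0.
by rewrite dvdn_exp2l // leq_subr.
Qed.

Lemma Xj_mono i j : i <= j -> Xj i \subset Xj j.
Proof.
move=> le_ij; rewrite /Xj cycle_subG.
have -> : (2 ^ (m - i) = 2 ^ (m - j) * 2 ^ ((m - i) - (m - j)))%N.
  by rewrite -expnD subnKC // leq_sub2l.
by rewrite expgM mem_cycle.
Qed.

Lemma Xj_subX j : Xj j \subset X.
Proof. by rewrite /Xj cycle_subG mem_cycle. Qed.

Lemma subX_Xj (A : {group gT}) : A \subset X -> exists2 j, j <= m & (A :=: Xj j /\ #|A| = 2 ^ j)%N.
Proof.
move=> sAX; have : (#|A| %| 2 ^ m)%N by rewrite -ox cardSg.
case/dvdn_pfactor => // j le_jm cA; exists j => //; split => //.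
apply/eqP; rewrite (eq_subG_cyclic (cycle_cyclic x)) // ?Xj_subX //.
by rewrite cA card_Xj.
Qed.

Lemma index2 (P : {group gT}) : ~~ (P \subset X) -> #|P| = (2 * #|P :&: X|)%N.
Proof.
move=> nPX.
have h1 := mul_cardG P X.
have h2 : (#|(P * X)%g| <= 2 * #|X|)%N.
  by rewrite card_X -expnS -oQ subset_leq_card ?subsetT.
have h3 : (#|P :&: X| %| #|P|)%N by rewrite cardSg ?subsetIl.
have h4 : #|P :&: X| < #|P|.
  rewrite ltn_neqAle subset_leq_card ?subsetIl // andbT.
  apply: contra nPX => /eqP e.
  have : P :&: X == P :> {set gT} by rewrite eqEcard subsetIl e leqnn.
  by move/eqP <-; rewrite subsetIr.
have h5 : 0 < #|P :&: X| by rewrite cardG_gt0.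
have h6 : (#|P| <= 2 * #|P :&: X|)%N.
  rewrite -(@leq_pmul2r #|X|) ?cardG_gt0 // h1 mulnAC.
  by rewrite leq_mul2r h2 orbT.
case/dvdnP: h3 => d hd; rewrite hd in h4 h6 *.
have : d = 2.
  have : (1 < d)%N by rewrite -(ltn_pmul2r h5) mul1n.
  by rewrite leq_pmul2r // in h6; lia.
by move->.
Qed.

Lemma outX u v : u \notin X -> v \notin X -> u * v^-1 \in X.
Proof.
move=> nu nv.
have dj : X :&: (X :* v) = set0.
  apply/setP => z; rewrite !inE; apply/negbTE/andP => -[zX /rcosetP[a aX e]].
  by subst z; move: zX; rewrite groupMl // (negbTE nv).
have cU : #|X :|: X :* v| = #|[set: gT]|.
  by rewrite cardsU dj cards0 subn0 card_rcoset card_X oQ expnS mul2n addnn.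
have : X :|: X :* v = [set: gT].
  by apply/eqP; rewrite eqEcard subsetT cU leqnn.
move/setP/(_ u); rewrite !inE (negbTE nu) /= => /rcosetP[a aX ->].
by rewrite mulgK.
Qed.

Definition gen j c := <<[set x ^+ (2 ^ (m - j))%N; c]>>.

Lemma genE (U : {group gT}) j c : ~~ (U \subset X) -> #|U :&: X| = (2 ^ j)%N -> j <= m ->
  c \in U -> c \notin X -> U :=: gen j c.
Proof.
move=> nUX cUX le_jm cU cX.
have eUX : U :&: X = Xj j.
  apply/eqP; rewrite (eq_subG_cyclic (cycle_cyclic x)) ?subsetIr ?Xj_subX //.
  by rewrite cUX card_Xj.
have xU : x ^+ (2 ^ (m - j))%N \in U.
  have : x ^+ (2 ^ (m - j))%N \in Xj j by apply: cycle_id.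
  by rewrite -eUX => /setIP[].
have sRU : gen j c \subset U.
  by rewrite gen_subG; apply/subsetP => z; rewrite !inE => /orP[]/eqP->.
have cR : c \in gen j c by rewrite mem_gen // !inE eqxx orbT.
have nRX : ~~ (gen j c \subset X).
  by apply/subsetPn; exists c.
have sXR : Xj j \subset gen j c :&: X.
  rewrite subsetI Xj_subX andbT /Xj cycle_subG mem_gen // !inE eqxx //.
apply/eqP; rewrite eq_sym eqEcard sRU /= (index2 nUX) (index2 nRX) cUX.
by rewrite -(card_Xj le_jm) leq_mul2l subset_leq_card.
Qed.


Lemma in_cycle_dvd (a : gT) d e : (d %| e)%N -> a ^+ e \in <[a ^+ d]>.
Proof. by case/dvdnP=> q ->; rewrite mulnC expgM mem_cycle. Qed.

Lemma perm_pair (P P' : {group gT}) b : P * P' = P' * P ->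
  ~~ (P \subset X) -> ~~ (P' \subset X) -> (#|P :&: X| <= #|P' :&: X|)%N ->
  b \in P -> b \notin X ->
  exists2 j, (j <= m)%N &
    (P' :=: gen j b \/ P' :=: gen j (x ^+ (2 ^ (m - j.+1))%N * b)).
Proof.
move=> cPP nPX nP'X le_PP' bP bX.
have [k le_km [eP cP]] := subX_Xj (subsetIr P X).
have [j le_jm [eP' cP']] := subX_Xj (subsetIr P' X).
exists j => //.
have le_kj : (k <= j)%N by rewrite -(leq_exp2l _ _ (isT : 1 < 2)%N) -cP -cP'.
have sPP' : P :&: X \subset P :&: P'.
  rewrite subsetI subsetIl /=; apply: subset_trans (subsetIl P' X).
  by rewrite eP eP' Xj_mono.
have [b' b'P' b'X] := subsetPn nP'X.
have defT := comm_joingE cPP.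
set T := (P <*> P')%G.
have cT := mul_cardG P P'.
rewrite -defT in cT.
have bT : b \in T by rewrite mem_gen // inE bP.
have nTX : ~~ (T \subset X) by apply/subsetPn; exists b.
have hT := index2 nTX.
have c1 : (#|P :&: X| <= #|P :&: P'|)%N by apply: subset_leq_card.
have cPi := index2 nPX.
have cP'i := index2 nP'X.
have [i le_im [eT cTi]] := subX_Xj (subsetIr T X).
have le_ij : (i <= j.+1)%N.
  rewrite -(leq_exp2l _ _ (isT : 1 < 2)%N) -cTi expnS.
  have h0 : (0 < 2 ^ k)%N by rewrite expn_gt0.
  rewrite cPi cP'i cP cP' hT in cT.
  rewrite cP in c1.
  have := leq_mul (leqnn (2 * #|T :&: X|)) c1; rewrite -cT.
  move: h0; set K := (2 ^ k)%N; set J := (2 ^ j)%N; set Z := #|T :&: X|.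
  move=> h0 h; nia.
set w := x ^+ (2 ^ (m - j.+1))%N.
have sTW : T :&: X \subset <[w]> by rewrite eT; apply: Xj_mono.
have bbT : b' * b^-1 \in T :&: X.
  rewrite inE outX // andbT /= defT cPP mem_mulg // groupV //.
have [t et] := cycleP _ _ (subsetP sTW _ bbT).
have w2 : w ^+ 2 \in P'.
  have : w ^+ 2 \in P' :&: X.
    have dv : (2 ^ (m - j) %| 2 ^ (m - j.+1) * 2)%N.
      by rewrite -expnSr dvdn_exp2l // subnS; case: (m - j).
    by rewrite eP' /w -expgM; apply: in_cycle_dvd.
  by case/setIP.
set g := (w ^+ 2) ^+ t./2.
have gP' : g \in P' by rewrite groupX.
have wX : w \in X by rewrite mem_cycle.
have et2 : b' * b^-1 = w ^+ odd t * g.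
  by rewrite et /g -(expgM w) -(expgD w) mul2n odd_double_half.
case: (boolP (odd t)) => ot; [rewrite ot in et2 | rewrite (negbTE ot) in et2].
  right; apply: genE => //; last first.
    by apply: contra bX => wbX; rewrite -(groupMl _ wX).
  have cwg : commute w g by apply: commuteX; apply: commuteX.
  have eb' : b' = w * g * b by rewrite -(expg1 w) -et2 mulgKV.
  have -> : w * b = g^-1 * b' by rewrite eb' cwg -mulgA mulKg.
  by rewrite groupM ?groupV.
left; apply: genE => //.
have -> : b = g^-1 * b'.
  by rewrite -(mul1g g) -et2 invMg invgK mulgKV.
by rewrite groupM ?groupV.
Qed.

Definition Fq (t : {set gT} * 'I_m.+1 * 'I_6) : {set gT} * {set gT} :=
  let P0 := t.1.1 in let j := nat_of_ord t.1.2 in let b := repr (P0 :\: X) in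
  let w := x ^+ (2 ^ (m - j.+1))%N in
  match nat_of_ord t.2 with
  | 0 => (Xj j, P0) | 1 => (P0, Xj j) | 2 => (P0, gen j b)
  | 3 => (P0, gen j (w * b)) | 4 => (gen j b, P0) | _ => (gen j (w * b), P0) end.

Lemma repr_out (A : {set gT}) : ~~ (A \subset X) -> repr (A :\: X) \in A /\ repr (A :\: X) \notin X.
Proof.
case/subsetPn => z zA zX.
have : repr (A :\: X) \in A :\: X by apply: (@mem_repr _ _ z); rewrite inE zX.
by rewrite inE => /andP[].
Qed.

Lemma permQ_sub : PermSet [set: gT] \subset
  Fq @: setX (setX (subgroup_lattice [set: gT]) [set: 'I_m.+1]) [set: 'I_6].
Proof.
apply/subsetP => -[A B]; rewrite inE /= => /and3P[AS BS /eqP cAB].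
have gA : group_set A by rewrite -inS.
have gB : group_set B by rewrite -inS.
pose P := Group gA; pose P' := Group gB.
have inD (C : {set gT}) (j : 'I_m.+1) (c : 'I_6) : C \in subgroup_lattice [set: gT] ->
   (C, j, c) \in setX (setX (subgroup_lattice [set: gT]) [set: 'I_m.+1]) [set: 'I_6].
  by move=> CS; rewrite !in_setX CS !in_setT.
case: (boolP (A \subset X)) => [sAX | nAX].
  have [j le_jm [eA _]] := subX_Xj (A:=P) sAX.
  apply/imsetP; exists (B, Ordinal (le_jm : j < m.+1), @Ordinal 6 0 isT); first exact: inD.
  by rewrite /Fq /= -eA.
case: (boolP (B \subset X)) => [sBX | nBX].
  have [j le_jm [eB _]] := subX_Xj (A:=P') sBX.
  apply/imsetP; exists (A, Ordinal (le_jm : j < m.+1), @Ordinal 6 1 isT); first exact: inD.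
  by rewrite /Fq /= -eB.
have [bA bX] := repr_out nAX.
have [b'B b'X] := repr_out nBX.
case: (leqP #|A :&: X| #|B :&: X|) => hle.
  have [j le_jm [e|e]] := @perm_pair P P' _ cAB nAX nBX hle bA bX.
    apply/imsetP; exists (A, Ordinal (le_jm : j < m.+1), @Ordinal 6 2 isT); first exact: inD.
    by rewrite /Fq /= -e.
  apply/imsetP; exists (A, Ordinal (le_jm : j < m.+1), @Ordinal 6 3 isT); first exact: inD.
  by rewrite /Fq /= -e.
have [j le_jm [e|e]] := @perm_pair P' P _ (esym cAB) nBX nAX (ltnW hle) b'B b'X.
  apply/imsetP; exists (B, Ordinal (le_jm : j < m.+1), @Ordinal 6 4 isT); first exact: inD.
  by rewrite /Fq /= -e.
apply/imsetP; exists (B, Ordinal (le_jm : j < m.+1), @Ordinal 6 5 isT); first exact: inD.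
by rewrite /Fq /= -e.
Qed.

Lemma permQ_bound :
  (#|PermSet [set: gT]| <= #|subgroup_lattice [set: gT]| * m.+1 * 6)%N.
Proof.
apply: leq_trans (subset_leq_card permQ_sub) _.
by apply: leq_trans (leq_imset_card _ _) _; rewrite !cardsX !cardsT !card_ord.
Qed.

Hypothesis o4 : forall c, c \notin X -> #[c] = 4.

Lemma lowS : (2 ^ m <= 4 * #|subgroup_lattice [set: gT]|)%N.
Proof.
have cA : #|~: X| = (2 ^ m)%N.
  have := cardsC X; rewrite -cardsT oQ card_X expnS mul2n -addnn => /eqP.
  by rewrite eqn_add2l => /eqP.
rewrite -cA.
pose f := fun c : gT => (<[c]> : {set gT}).
have sI : f @: (~: X) \subset subgroup_lattice [set: gT].
  by apply/subsetP => H /imsetP[c _ eH]; subst H; rewrite inS /f groupP.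
apply: leq_trans (_ : 4 * #|f @: (~: X)| <= _)%N; last by rewrite leq_mul2l subset_leq_card.
rewrite -sum1_card (partition_big_imset f) /= mulnC -sum_nat_const.
apply: leq_sum => H /imsetP[c0 c0A eH]; subst H.
rewrite sum1dep_card -(o4 (c:=c0)); last by rewrite inE in c0A.
apply: subset_leq_card; apply/subsetP => c; rewrite inE => /andP[_ /eqP e].
have : c \in f c by exact: cycle_id.
by rewrite e.
Qed.

Lemma two_gen (P : {group gT}) : exists ab : gT * gT, (P : {set gT}) == <<[set ab.1; ab.2]>>.
Proof.
case: (boolP (P \subset X)) => [sPX | nPX].
  have [j le_jm [eP _]] := subX_Xj sPX.
  exists (x ^+ (2 ^ (m - j))%N, x ^+ (2 ^ (m - j))%N); rewrite /= eP /Xj.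
  by rewrite /cycle setUid.
have [j le_jm [_ cPX]] := subX_Xj (A := (P :&: X)%G) (subsetIr _ _).
have [cP cX] := repr_out nPX.
exists (x ^+ (2 ^ (m - j))%N, repr (P :\: X)); apply/eqP.
exact: (genE nPX cPX le_jm cP cX).
Qed.

End QPart.

Section GPart.
Variables (gT : finGroupType).
Hypothesis hgen : forall P : {group gT}, exists ab : gT * gT, (P : {set gT}) == <<[set ab.1; ab.2]>>.
Local Notation pT := (('I_2 * gT)%type : finGroupType).

Lemma I2_cases (u : 'I_2) : u = 1 \/ u = ord_max.
Proof. by case: u => [[|[|k]] Hk]; [left; apply: val_inj | right; apply: val_inj |]. Qed.

Lemma pmulE (u v : pT) : u * v = (u.1 * v.1, u.2 * v.2). Proof. by []. Qed.
Lemma pinvE (u : pT) : u^-1 = (u.1^-1, u.2^-1). Proof. by []. Qed.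
Lemma poneE : (1 : pT) = (1, 1). Proof. by []. Qed.

Definition pr (H : {set pT}) : {set gT} := snd_morphism 'I_2 gT @* H.

Definition ab (P : {set gT}) : gT * gT := odflt (1, 1) [pick ab | P == <<[set ab.1; ab.2]>>].

Lemma abE (P : {group gT}) : (P : {set gT}) = <<[set (ab P).1; (ab P).2]>>.
Proof.
rewrite /ab; case: pickP => [ab1 /eqP //| none].
by have [ab0 e] := hgen P; rewrite none in e.
Qed.

Definition lift (P : {set gT}) (i : option ('I_2 * 'I_2)) : {set pT} :=
  match i with None => [set u : pT | u.2 \in P]
  | Some st => <<[set (st.1, (ab P).1); (st.2, (ab P).2)]>> end.

Lemma prE (H : {set pT}) : pr H = snd @: H.
Proof. by rewrite /pr morphimEsub ?subsetT. Qed.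

Lemma lift_all (H : {group pT}) : exists i, (H : {set pT}) = lift (pr H) i.
Proof.
set P := (snd_morphism 'I_2 gT @* H)%G.
have eP : pr H = P by [].
have eab := abE P.
set a := (ab P).1 in eab; set b := (ab P).2 in eab.
case: (boolP ((ord_max : 'I_2, 1 : gT) \in H)) => [eH | neH].
  exists None; rewrite /lift; apply/setP => u; rewrite inE prE.
  apply/idP/imsetP => [uH | [h hH eh]]; first by exists u.
  have [e1|e1] := I2_cases (u.1 * h.1^-1).
    have e1' : u.1 = h.1 by apply/eqP; rewrite eq_mulgV1 e1.
    suff -> : u = h by [].
    by case: u h e1' eh {hH e1} => [u1 u2] [h1 h2] /= -> ->.
  have -> : u = (u.1 * h.1^-1, 1) * h.
    by rewrite pmulE /= mulgKV mul1g -eh; case: (u).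
  by rewrite groupM // e1.
have aP : a \in P by rewrite eab mem_gen // !inE eqxx.
have bP : b \in P by rewrite eab mem_gen // !inE eqxx orbT.
rewrite -eP prE in aP bP.
case/imsetP: aP => h1 h1H e1; case/imsetP: bP => h2 h2H e2.
exists (Some (h1.1, h2.1)); rewrite /lift /= eP -/a -/b.
have -> : (h1.1, a) = h1 by rewrite e1; case: (h1).
have -> : (h2.1, b) = h2 by rewrite e2; case: (h2).
have sG : <<[set h1; h2]>> \subset H.
  by rewrite gen_subG; apply/subsetP => z; rewrite !inE => /orP[]/eqP->.
apply/eqP; rewrite eqEsubset sG andbT; apply/subsetP => h hH.
have : h.2 \in P by rewrite -eP prE; apply/imsetP; exists h.
rewrite eab.
have -> : <<[set a; b]>> = snd_morphism 'I_2 gT @* <<[set h1; h2]>>.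
  by rewrite morphim_gen ?subsetT // morphimU !morphim_set1 ?inE //= e1 e2.
case/morphimP => h' _ h'G eh'.
have h'H : h' \in H by apply: (subsetP sG).
have dH : h * h'^-1 \in H by rewrite groupM ?groupV.
have d2 : (h * h'^-1).2 = 1 by rewrite pmulE pinvE /= eh' mulgV.
have [d1|d1] := I2_cases (h * h'^-1).1.
  have : h * h'^-1 = 1 by rewrite poneE; case: (h * h'^-1) d1 d2 => /= ? ? -> ->.
  by move/eqP; rewrite -eq_mulgV1 => /eqP ->.
have : h * h'^-1 = (ord_max, 1) by case: (h * h'^-1) d1 d2 => /= ? ? -> ->.
by move=> e; rewrite e in dH; rewrite dH in neH.
Qed.
Definition Fg (t : ({set gT} * {set gT}) * option ('I_2 * 'I_2) * option ('I_2 * 'I_2))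
  : {set pT} * {set pT} := (lift t.1.1.1 t.1.2, lift t.1.1.2 t.2).

Lemma permG_sub : PermSet [set: pT] \subset
  Fg @: setX (setX (PermSet [set: gT]) [set: option ('I_2 * 'I_2)]) [set: option ('I_2 * 'I_2)].
Proof.
apply/subsetP => -[A B]; rewrite inE /= => /and3P[AS BS /eqP cAB].
have gA : group_set A by rewrite -inS.
have gB : group_set B by rewrite -inS.
pose H := Group gA; pose K := Group gB.
have [i ei] := lift_all H.
have [j ej] := lift_all K.
apply/imsetP; exists ((pr A, pr B), i, j); last by rewrite /Fg /= -ei -ej.
rewrite !in_setX !in_setT !andbT inE /= !inS.
rewrite (groupP (snd_morphism 'I_2 gT @* H)%G) (groupP (snd_morphism 'I_2 gT @* K)%G) /=.
by rewrite /pr -!morphimMl ?subsetT // cAB.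
Qed.

Lemma permG_bound : (#|PermSet [set: pT]| <= #|PermSet [set: gT]| * 5 * 5)%N.
Proof.
apply: leq_trans (subset_leq_card permG_sub) _.
apply: leq_trans (leq_imset_card _ _) _.
by rewrite !cardsX !cardsT card_option card_prod !card_ord.
Qed.

Definition liftT (P : {set gT}) : {set pT} := [set u : pT | u.2 \in P].

Lemma SG_ge : (#|subgroup_lattice [set: gT]| <= #|subgroup_lattice [set: pT]|)%N.
Proof.
rewrite -(@card_in_imset _ _ liftT); last first.
  move=> P Q _ _ e; apply/setP => q.
  by move/setP/(_ ((1 : 'I_2), q)): e; rewrite /liftT !inE.
apply: subset_leq_card; apply/subsetP => L /imsetP[P PS eL]; subst L.
rewrite inS; rewrite inS in PS.
apply/group_setP; split; first by rewrite inE (group1 (Group PS)).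
move=> u v; rewrite !inE => uP vP.
by rewrite pmulE /= (groupM (G := Group PS)).
Qed.

End GPart.

Lemma pow_sq m : (6 <= m)%N -> (m.+1 * m.+1 <= 2 ^ m)%N.
Proof.
elim: m => // m IH; rewrite leq_eqVlt => /orP[/eqP <- // | h].
have := IH h; rewrite expnS; nia.
Qed.

Lemma nat_bound m : (2 <= m)%N ->
  (#|PermSet [set: Z2xQ m]| * 2 ^ m <= 600 * m.+1 * #|subgroup_lattice [set: Z2xQ m]| ^ 2)%N.
Proof.
move=> m2.
have n2 : (2 < m.+1)%N by [].
have [[x y] genG _] :=
  generators_quaternion (G := [set: 'Q_(2 ^ m.+1)]%G) n2 (isog_refl _).
have [oG Gx ox _] := genG.
have [[_ o4' _] _ _ _ _] := quaternion_structure n2 genG (isog_refl _).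
have o4 : forall c, c \notin <[x]> -> #[c] = 4.
  by move=> c cX; apply: o4'; rewrite inE cX in_setT.
have oQ : #|[set: 'Q_(2 ^ m.+1)]| = (2 ^ m.+1)%N by [].
have ox' : #[x] = (2 ^ m)%N by [].
have h1 := permG_bound (two_gen oQ ox').
have h2 := permQ_bound oQ ox'.
have h3 := lowS oQ ox' o4.
have h4 := SG_ge (quaternion_gtype (2 ^ m.+1)).
move: h1 h2 h3 h4.
set PG := #|PermSet _|; set PQ := #|PermSet _|; set SQ := #|subgroup_lattice _|; set SG := #|subgroup_lattice _|.
set E := (2 ^ m)%N.
move=> h1 h2 h3 h4.
have h5 : (PG <= SQ * m.+1 * 150)%N by apply: leq_trans h1 _; nia.
have h6 := leq_mul h5 h3.
apply: leq_trans h6 _.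
have h7 := leq_mul h4 h4.
rewrite expnS expn1; nia.
Qed.

Import GRing.Theory Num.Theory Order.TTheory.

Lemma SG_pos (hT : finGroupType) : (0 < #|subgroup_lattice [set: hT]|)%N.
Proof. by apply/card_gt0P; exists [set: hT]; rewrite inS groupP. Qed.

Lemma final_ineq (p s k e c : rat) : (0 < k -> 0 < s -> p * k <= c * s -> c < e * k -> p / s < e)%R.
Proof. move=> h4 h3 h1 h2; rewrite ltr_pdivrMr //; nra. Qed.

Theorem corollary2p8 :
  forall eps : rat, (0 < eps)%R ->
  exists N : nat, forall m : nat, (N <= m)%N ->
    (sd [set: Z2xQ m] < eps)%R.
Proof.
move=> eps eps0.
pose c : rat := (600%N)%:R.
exists (maxn 6 (Num.bound (c / eps)%R)) => m; rewrite geq_max => /andP[m6 mB].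
have m2 : (2 <= m)%N by apply: leq_trans m6.
have hn := nat_bound m2.
have hp := pow_sq m6.
have sp := SG_pos (Z2xQ m).
move: hn sp; rewrite /sd.
set PG := #|_|; set SG := #|subgroup_lattice _| => hn sp.
have key : (PG * m.+1 <= 600 * SG ^ 2)%N.
  rewrite -(@leq_pmul2r m.+1) //.
  apply: leq_trans (_ : PG * 2 ^ m <= _)%N; first by rewrite -mulnA leq_mul2l hp orbT.
  by apply: leq_trans hn _; nia.
have keyR : (PG%:R * (m.+1)%:R <= c * (SG ^ 2)%N%:R :> rat)%R.
  rewrite /c -natrM -natrM ler_nat; exact: key.
have c0 : (0 <= c / eps)%R by apply: divr_ge0; [exact: ler0n | exact: ltW].
have bd : (c / eps < (m.+1)%:R :> rat)%R.
  apply: lt_le_trans (Num.Theory.archi_boundP c0) _.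
  by rewrite ler_nat; apply: leq_trans mB _.
have bd2 : (c < eps * (m.+1)%:R :> rat)%R.
  by rewrite mulrC -ltr_pdivrMr.
have s0 : (0 < (SG ^ 2)%N%:R :> rat)%R by rewrite ltr0n expn_gt0 sp.
have k0 : (0 < (m.+1)%:R :> rat)%R by rewrite ltr0n.
exact: (final_ineq k0 s0 keyR bd2).
Qed.
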